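(* Let $s\ge1$, $n=2s$, let $A$ be the $n\times n$ matrix with $A_{ij}=1$ if $|i-j|\le s-1$ and $0$ otherwise, let $J$ be the $n\times n$ all-ones matrix and $B=J-A$. Label the eigenvalues of $A$ as $|\lambda_1(A)|\ge|\lambda_2(A)|\ge\dots\ge|\lambda_n(A)|$ and those of $B$ as $\gamma_1,\dots,\gamma_n$ with $|\gamma_1|\ge|\gamma_2|\ge\dots\ge|\gamma_n|$. Then $|\lambda_2(A)|=|\gamma_2|$. Moreover, $\lambda_2(A)$ and $\gamma_2$ have the same eigenvector, i.e. there is a nonzero vector which is an eigenvector of $A$ for $\lambda_2(A)$ and an eigenvector of $B$ for $\gamma_2$. *)

(* Defs.v *)
From HB Require Import structures.
From mathcomp Require Import all_boot all_order all_algebra.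
Set Implicit Arguments. Unset Strict Implicit. Unset Printing Implicit Defensive.
Import Order.TTheory GRing.Theory Num.Theory.
Local Open Scope ring_scope.

(* The n x n band matrix A_{ij} = 1 iff |i - j| <= s - 1 (indices 0-based,
   which does not affect |i - j|). *)
Definition bandA (R : ringType) (s : nat) : 'M[R]_(s.*2) :=
  \matrix_(i, j) (if (maxn i j - minn i j <= s.-1)%N then 1 else 0).

Definition bandB (R : ringType) (s : nat) : 'M[R]_(s.*2) :=
  const_mx 1 - bandA R s.

(* l is a labelling of the eigenvalues (with algebraic multiplicity) of M,
   ordered so that |l_1| >= |l_2| >= ... >= |l_n|. *)
Definition abs_ordered_eigenvalues (R : realFieldType) (n : nat)
    (M : 'M[R]_n) (l : seq R) : Prop :=
  [/\ size l = n,
      char_poly M = \prod_(x <- l) ('X - x%:P)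
    & sorted (fun x y => `|y| <= `|x|) l].

(* Main.v *)
Require Import Defs.
From HB Require Import structures.
From mathcomp Require Import all_boot all_order all_algebra.
From mathcomp Require Import complex zify ring lra.
Import Order.TTheory GRing.Theory Num.Theory.
Local Open Scope ring_scope.
Local Open Scope sesquilinear_scope.

Lemma char_poly_conj (F : fieldType) n (P M : 'M[F]_n) :
  P \in unitmx -> char_poly (invmx P *m M *m P) = char_poly M.
Proof.
move=> Pu.
rewrite /char_poly /char_poly_mx.
have PP : map_mx polyC (invmx P) *m map_mx polyC P = 1%:M.
  by rewrite -map_mxM mulVmx // map_mx1.
have -> : ('X%:M - map_mx polyC (invmx P *m M *m P)) =
   map_mx polyC (invmx P) *m ('X%:M - map_mx polyC M) *m map_mx polyC P.
  by rewrite mulmxBr mulmxBl !map_mxM mul_mx_scalar -scalemxAl PP scalemx1.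
by rewrite !det_mulmx mulrAC -det_mulmx PP det1 mul1r.
Qed.

Lemma trmxC_mul (C : numClosedFieldType) m n p (A : 'M[C]_(m, n)) (B : 'M[C]_(n, p)) :
  (A *m B)^t* = B^t* *m A^t*.
Proof. by rewrite trmx_mul map_mxM. Qed.

Section S.
Variable R : rcfType.
Local Notation C := R[i].
Local Notation cR := (real_complex R).
Lemma cR_real (x : R) : cR x \is Num.real.
Proof. by rewrite complex_real. Qed.
Lemma conj_cR (x : R) : (cR x)^* = cR x.
Proof. by rewrite conj_Creal ?cR_real. Qed.

Lemma conj_map_cR m n (A : 'M[R]_(m, n)) : map_mx Num.conj (map_mx cR A) = map_mx cR A.
Proof. by apply/matrixP => i j; rewrite !mxE conj_cR. Qed.

Lemma spec_real n (M : 'M[R]_n) (rs : seq R) :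
  M^T = M -> char_poly M = \prod_(r <- rs) ('X - r%:P) ->
  (forall (x : 'rV[R]_n) r0, (forall r, r \in rs -> r <= r0) ->
     (x *m M *m x^T) 0 0 <= r0 * (x *m x^T) 0 0)
  /\ \sum_(r <- rs) r ^+ 2 = \sum_i \sum_j M i j ^+ 2.
Proof.
move=> Msym cpM.
set Mc := map_mx cR M.
have McC : Mc^t* = Mc by rewrite map_trmx Msym conj_map_cR.
have Mcn : Mc \is normalmx by apply/normalmxP; rewrite McC.
set P := spectralmx Mc; set d := spectral_diag Mc.
have HMc : Mc = invmx P *m diag_mx d *m P by apply/orthomx_spectralP.
have Pu : P \is unitarymx := spectral_unitarymx Mc.
have Punit : P \in unitmx := spectral_unit Mc.
have iP : invmx P = P^t* by rewrite invmx_unitary.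
have pe : perm_eq [seq d 0 i | i <- enum 'I_n] (map cR rs).
  apply: prod_XsubC_eq.
  rewrite !big_map -enumT big_enum /=.
  have <- : char_poly (diag_mx d) = \prod_(i in 'I_n) ('X - (d 0 i)%:P).
    by rewrite char_poly_trig ?diag_mx_is_trig //; apply: eq_bigr => i _; rewrite mxE eqxx.
  rewrite -(@char_poly_conj _ _ P (diag_mx d) Punit) -HMc /Mc -map_char_poly cpM rmorph_prod.
  by apply: eq_bigr => r _; rewrite /= map_polyXsubC.
have din : forall i, exists2 r, r \in rs & d 0 i = cR r.
  move=> i; have : d 0 i \in map cR rs.
    by rewrite -(perm_mem pe); apply: map_f; rewrite mem_enum.
  by case/mapP => r rin ->; exists r.
have PiP : invmx P *m P = 1%:M by rewrite mulVmx.
have PPi : P *m invmx P = 1%:M by rewrite mulmxV.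
clearbody P d.
split.
  move=> x r0 hr0.
  set xc := map_mx cR x.
  have E1 : cR ((x *m M *m x^T) 0 0) = (xc *m Mc *m xc^T) 0 0.
    by rewrite /xc /Mc map_trmx -!map_mxM [in RHS]mxE.
  have E2 : cR ((x *m x^T) 0 0) = (xc *m xc^T) 0 0.
    by rewrite /xc map_trmx -!map_mxM [in RHS]mxE.
  set w := P *m xc^T.
  have wC : w^t* = xc *m P^t*.
    by rewrite trmxC_mul /= trmxK conj_map_cR.
  have F1 : xc *m Mc *m xc^T = w^t* *m diag_mx d *m w.
    by rewrite HMc iP wC /w !mulmxA.
  have F2 : xc *m xc^T = w^t* *m w.
    by rewrite wC -iP /w mulmxA -(mulmxA xc) PiP mulmx1.
  rewrite -lecR rmorphM /= E1 E2 F1 F2 mul_mx_diag !mxE -subr_ge0 mulr_sumr -sumrB.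
  apply: sumr_ge0 => k _; rewrite !mxE.
  have [r rin ->] := din k.
  move: (\sum_j _) => z.
  have -> : z^* * cR r * z = cR r * (z^* * z) by rewrite mulrAC mulrC.
  rewrite -mulrBl; apply: mulr_ge0; last by rewrite mulrC mul_conjC_ge0.
  by rewrite -rmorphB /= ler0c subr_ge0 hr0.
apply: (@complexI R).
have L1 : cR (\sum_(r <- rs) r ^+ 2) = \sum_(i < n) d 0 i ^+ 2.
  rewrite rmorph_sum /=.
  rewrite (eq_bigr (fun r => cR r ^+ 2)); last by move=> r _; rewrite rmorphXn.
  rewrite -(big_map cR xpredT (fun c => c ^+ 2)) -(perm_big _ pe) big_map.
  by rewrite big_enum.
have MM : Mc *m Mc = invmx P *m (diag_mx d *m diag_mx d) *m P.
  by rewrite {1 2}HMc !mulmxA -(mulmxA (invmx P *m diag_mx d) P (invmx P)) PPi mulmx1.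
have L2 : \tr (Mc *m Mc) = \sum_(i < n) d 0 i ^+ 2.
  rewrite MM mxtrace_mulC !mulmxA PPi mul1mx mul_mx_diag /mxtrace.
  by apply: eq_bigr => i _; rewrite !mxE eqxx mulr1n.
rewrite L1 -L2 /mxtrace rmorph_sum /=; apply: eq_bigr => i _.
rewrite rmorph_sum mxE /=; apply: eq_bigr => j _.
have Mji : M j i = M i j by rewrite -{1}Msym mxE.
by rewrite !mxE Mji rmorphXn.
Qed.
End S.
Lemma split_prod {F : fieldType} {p q : {poly F}} {l : seq F} :
  p \is monic -> q \is monic -> p * q = \prod_(x <- l) ('X - x%:P) ->
  exists hs ks, [/\ p = \prod_(x <- hs) ('X - x%:P), q = \prod_(x <- ks) ('X - x%:P)
                  & perm_eq l (hs ++ ks)].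
Proof.
move=> pm qm e.
have dp : p %| p * q := dvdp_mulIl p q.
have dq : q %| p * q := dvdp_mulIr p q.
rewrite e in dp dq.
have [m1 hm1] := dvdp_prod_XsubC dp.
have [m2 hm2] := dvdp_prod_XsubC dq.
move: hm1 hm2; rewrite !eqp_monic ?monic_prod_XsubC // => /eqP hp /eqP hq.
exists (mask m1 l), (mask m2 l); split => //.
by apply: prod_XsubC_eq; rewrite big_cat -hp -hq /= e.
Qed.

Lemma exists_max (R : realDomainType) (f : R -> R) (l : seq R) : l != [::] ->
  exists2 y, y \in l & forall x, x \in l -> f x <= f y.
Proof.
elim: l => [//|a l IH] _.
case: (eqVneq l [::]) => [->|ln].
  by exists a => [|x]; rewrite ?mem_head // inE => /eqP ->.
have [y yl hy] := IH ln.
case: (leP (f a) (f y)) => h.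
  exists y; first by rewrite inE yl orbT.
  by move=> x; rewrite inE => /orP[/eqP ->|/hy].
exists a; first by rewrite mem_head.
move=> x; rewrite inE => /orP[/eqP ->//|/hy hx]; exact: (le_trans hx (ltW h)).
Qed.

Lemma char_poly_opp (F : fieldType) n (M : 'M[F]_n) (l : seq F) :
  char_poly M = \prod_(x <- l) ('X - x%:P) ->
  char_poly (- M) = \prod_(x <- l) ('X - (- x)%:P).
Proof.
move=> cpM.
have sl : size l = n.
  by have := size_char_poly M; rewrite cpM size_prod_XsubC => -[].
have E : char_poly_mx (- M) = - map_mx (comp_poly (- 'X)) (char_poly_mx M).
  apply/matrixP => i j; rewrite !mxE comp_polyB comp_polyC polyCN.
  case: (i == j); rewrite ?mulr1n ?mulr0n ?comp_polyX ?comp_poly0; ring.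
have P1 : forall (f : F -> {poly F}) (l' : seq F),
    \prod_(x <- l') ((-1) * f x) = (-1) ^+ size l' * \prod_(x <- l') f x.
  move=> f; elim => [|a l' IH]; first by rewrite !big_nil mulr1.
  by rewrite !big_cons IH /= exprS; ring.
rewrite /char_poly E -scaleN1r detZ det_map_mx -/(char_poly M) cpM rmorph_prod /=.
rewrite (eq_bigr (fun x => (-1) * ('X - (- x)%:P))); last first.
  by move=> x _; rewrite comp_polyB comp_polyX comp_polyC polyCN; ring.
rewrite P1 sl mulrA -exprD -signr_odd addnn odd_double expr0 mul1r.
by [].
Qed.
Lemma sum_lt (m k : nat) : (\sum_(j < m) ((j < k)%N : nat) = minn m k)%N.
Proof.
elim: m => [|m IH]; first by rewrite big_ord0 min0n.
rewrite big_ord_recr /= IH; case: (ltnP m k) => h /=; lia.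
Qed.

Lemma tri (s : nat) :
  (2 * \sum_(i < s) \sum_(j < s) ((i + j < s)%N : nat) = s * s.+1)%N.
Proof.
have -> : (\sum_(i < s) \sum_(j < s) ((i + j < s)%N : nat) = \sum_(i < s) (s - i))%N.
  apply: eq_bigr => i _.
  rewrite (eq_bigr (fun j : 'I_s => ((j < s - i)%N : nat))); last by move=> j _; rewrite ltn_subRL.
  by rewrite sum_lt; apply/minn_idPr; rewrite leq_subr.
elim: s => [|s IH]; first by rewrite big_ord0.
rewrite big_ord_recl /= subn0.
rewrite (eq_bigr (fun i : 'I_s => s - i)%N); last by move=> i _; rewrite /bump /= add1n subSS.
rewrite mulnDr IH; lia.
Qed.

Definition rabs (R : realDomainType) := fun x y : R => `|y| <= `|x|.

Lemma rabs_trans (R : realDomainType) : transitive (@rabs R).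
Proof. by move=> y x z h1 h2; rewrite /rabs; exact: le_trans h2 h1. Qed.

Lemma second_elem (R : realDomainType) (lam rest : seq R) (k0 mu : R) :
  sorted (fun x y => `|y| <= `|x|) lam -> perm_eq lam (k0 :: rest) -> mu < `|k0| ->
  (forall x, x \in rest -> `|x| <= mu) -> (exists2 y, y \in rest & `|y| = mu) ->
  lam`_1 \in rest /\ `|lam`_1| = mu.
Proof.
move=> so pe lt hr [y yr hy].
have sz := perm_size pe.
have rsz : (0 < size rest)%N by case: (rest) yr.
case: lam so pe sz => [|a [|b t]] so pe sz; rewrite /= in sz; try lia.
move: so => /= /andP[hab st].
change (is_true (path (@rabs R) b t)) in st.
rewrite (path_sortedE (@rabs_trans R)) in st; case/andP: st => hbt _.
have ka : `|k0| <= `|a|.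
  have : k0 \in a :: b :: t by rewrite (perm_mem pe) mem_head.
  rewrite inE => /orP[/eqP ->//|hk].
  rewrite inE in hk; case/orP: hk => [/eqP ->//|hk].
  exact: le_trans (allP hbt k0 hk) hab.
have ea : a = k0.
  apply/eqP; apply/negPn/negP => ne.
  have : a \in k0 :: rest by rewrite -(perm_mem pe) mem_head.
  rewrite inE (negbTE ne) /= => /hr ha.
  by have := lt_le_trans (le_lt_trans ha lt) ka; rewrite ltxx.
subst a; rewrite perm_cons in pe.
have br : b \in rest by rewrite -(perm_mem pe) mem_head.
split => //; apply/eqP; rewrite eq_le hr //=.
have : y \in b :: t by rewrite (perm_mem pe).
rewrite inE -hy => /orP[/eqP ->//|/(allP hbt)]; done.
Qed.
Section Mx.
Variable R : rcfType.
Variable s : nat.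
Definition Jm : 'M[R]_s := const_mx 1.
Definition Hm : 'M[R]_s := \matrix_(i, j) ((i + j < s)%N)%:R.
Definition Km : 'M[R]_s := Jm *+ 2 - Hm.
Definition Lm : 'M[R]_s := \matrix_(i, j) ((j < i)%N)%:R.
Definition Rv : 'M[R]_s := \matrix_(i, j) ((i + j == s.-1)%N)%:R.

Lemma sum_Rv_r (F : 'I_s -> R) (j : 'I_s) :
  \sum_k F k * ((k + j == s.-1)%N)%:R = F (rev_ord j).
Proof.
rewrite (bigD1 (rev_ord j)) //= big1 ?addr0.
  have -> : (s - j.+1 + j == s.-1)%N by apply/eqP; have := ltn_ord j; lia.
  by rewrite mulr1.
move=> k /eqP hk; have -> : (k + j == s.-1)%N = false.
  apply/negP => /eqP h; apply: hk; apply/val_inj => /=; have := ltn_ord j; lia.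
by rewrite mulr0.
Qed.

Lemma sum_Rv_l (F : 'I_s -> R) (i : 'I_s) :
  \sum_(k < s) ((i + k == s.-1)%N)%:R * F k = F (rev_ord i).
Proof.
rewrite -(sum_Rv_r F i); apply: eq_bigr => k _; by rewrite mulrC [(i + k)%N]addnC.
Qed.

Lemma mulmxRv m (A : 'M[R]_(m, s)) i j : (A *m Rv) i j = A i (rev_ord j).
Proof. by rewrite mxE -(sum_Rv_r (fun k => A i k)); apply: eq_bigr => k _; rewrite /Rv mxE. Qed.
Lemma mulRvmx m (A : 'M[R]_(s, m)) i j : (Rv *m A) i j = A (rev_ord i) j.
Proof. by rewrite mxE -(sum_Rv_l (fun k => A k j)); apply: eq_bigr => k _; rewrite /Rv mxE. Qed.

Lemma LRv : Lm *m Rv = Jm - Hm.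
Proof.
apply/matrixP => i j; rewrite mulmxRv /Lm /Jm /Hm !mxE /=.
have := ltn_ord i; have := ltn_ord j.
case: (ltnP (s - j.+1) i) => h1; case: (ltnP (i + j) s) => h2 //= *; try lia.
all: by rewrite ?subrr ?subr0.
Qed.

Lemma JRv : Jm *m Rv = Jm.
Proof. by apply/matrixP => i j; rewrite mulmxRv /Jm !mxE. Qed.
Lemma RvJ : Rv *m Jm = Jm.
Proof. by apply/matrixP => i j; rewrite mulRvmx /Jm !mxE. Qed.
Lemma RvH : Rv *m Hm = Jm - Lm^T.
Proof.
apply/matrixP => i j; rewrite mulRvmx /Lm /Jm /Hm !mxE /=.
have := ltn_ord i; have := ltn_ord j.
case: (ltnP (s - i.+1 + j) s) => h1; case: (ltnP i j) => h2 //= *; try lia.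
all: by rewrite ?subrr ?subr0.
Qed.
Lemma RvRv : Rv *m Rv = 1%:M.
Proof.
apply/matrixP => i j; rewrite mulRvmx /Rv !mxE /=.
have := ltn_ord i; have := ltn_ord j.
case: (eqVneq i j) => [->|h] /= *.
  by have -> : (s - j.+1 + j == s.-1)%N by apply/eqP; lia.
have -> // : (s - i.+1 + j == s.-1)%N = false.
apply/negP => /eqP h'; move/eqP: h; apply; apply/val_inj => /=; lia.
Qed.

Lemma RvK : Rv *m Km = Jm + Lm^T.
Proof.
apply/matrixP => i j; rewrite mulRvmx /Km /Lm /Jm /Hm !mxE /=.
have := ltn_ord i; have := ltn_ord j.
case: (ltnP (s - i.+1 + j) s) => h1; case: (ltnP i j) => h2 //= *; try lia.
all: rewrite ?mulr1n; ring.
Qed.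

Definition Ablk : 'M[R]_(s + s) := block_mx Jm Lm Lm^T Jm.
Definition Tm : 'M[R]_(s + s) := block_mx 1%:M 1%:M Rv (- Rv).
Definition Dm : 'M[R]_(s + s) := block_mx Km 0 0 Hm.
Definition Dm2 : 'M[R]_(s + s) := block_mx Hm 0 0 (- Hm).

Lemma ATD : Ablk *m Tm = Tm *m Dm.
Proof.
rewrite /Ablk /Tm /Dm !mulmx_block !mulmx1 !mulmx0 !mul1mx !mulmxN !mulNmx !add0r !addr0.
rewrite LRv JRv RvK RvH /Km.
congr block_mx; apply/matrixP => i j; rewrite !mxE; ring.
Qed.

Lemma Bblk : const_mx 1 - Ablk = block_mx (Jm - Jm) (Jm - Lm) (Jm - Lm^T) (Jm - Jm).
Proof.
by rewrite /Ablk -block_mx_const opp_block_mx add_block_mx.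
Qed.

Lemma BTD : (const_mx 1 - Ablk) *m Tm = Tm *m Dm2.
Proof.
rewrite Bblk /Tm /Dm2 !mulmx_block !mulmx1 !mulmx0 !mul1mx !mulmxN !mulNmx !add0r !addr0.
rewrite !mulmxBl LRv JRv RvH.
congr block_mx; apply/matrixP => i j; rewrite !mxE; ring.
Qed.

Lemma Tunit : Tm \in unitmx.
Proof.
have h : block_mx 1%:M Rv 1%:M (- Rv) *m Tm = (2 : R)%:M.
  rewrite /Tm mulmx_block mulmx1 mulmxN mulNmx mulNmx mulmxN opprK RvRv subrr.
  rewrite [RHS]scalar_mx_block; congr block_mx; apply/matrixP => i j; rewrite !mxE; case: (i == j); rewrite ?mulr1n ?mulr0n; ring.
have h2 : (2^-1 *: block_mx 1%:M Rv 1%:M (- Rv)) *m Tm = 1%:M.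
  by rewrite -scalemxAl h scale_scalar_mx mulVf // pnatr_eq0.
by case: (mulmx1_unit h2).
Qed.
Definition Amat (R : nzRingType) (s n : nat) : 'M[R]_n :=
  \matrix_(i, j) (if (maxn i j - minn i j <= s.-1)%N then 1 else 0).

Lemma bandE : Amat R s (s + s) = Ablk.
Proof.
apply/matrixP => i j; rewrite -(splitK i) -(splitK j).
case: (split i) => i'; case: (split j) => j'; rewrite /= /Ablk.
- rewrite block_mxEul /Amat /Jm !mxE /=; rewrite ifT //.
  have := ltn_ord i'; have := ltn_ord j'; lia.
- rewrite block_mxEur /Amat /Lm !mxE /=.
  have := ltn_ord i'; have := ltn_ord j'.
  case: (ltnP j' i') => h *; [rewrite ifT | rewrite ifF] => //; [lia | apply/negbTE; rewrite -ltnNge; lia].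
- rewrite block_mxEdl /Amat /Lm !mxE /=.
  have := ltn_ord i'; have := ltn_ord j'.
  case: (ltnP i' j') => h *; [rewrite ifT | rewrite ifF] => //; [lia | apply/negbTE; rewrite -ltnNge; lia].
- rewrite block_mxEdr /Amat /Jm !mxE /=; rewrite ifT //.
  have := ltn_ord i'; have := ltn_ord j'; lia.
Qed.
End Mx.

Definition cnt (s : nat) := (\sum_(i < s) \sum_(j < s) ((i + j < s)%N : nat))%N.

Section Sums.
Variable R : rcfType.
Variable s : nat.

Lemma Hsym : (Hm R s)^T = Hm R s.
Proof. by apply/matrixP => i j; rewrite /Hm !mxE addnC. Qed.
Lemma Ksym : (Km R s)^T = Km R s.
Proof.
by rewrite /Km raddfB /= raddfMn /= Hsym /Jm trmx_const.
Qed.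

Lemma KE i j : Km R s i j = 2 - Hm R s i j.
Proof. by rewrite /Km /Jm !mxE. Qed.
Lemma HE i j : Hm R s i j = ((i + j < s)%N)%:R.
Proof. by rewrite /Hm mxE. Qed.

Lemma sumH : \sum_i \sum_j Hm R s i j = (cnt s)%:R.
Proof.
rewrite /cnt natr_sum; apply: eq_bigr => i _.
by rewrite natr_sum; apply: eq_bigr => j _; rewrite HE.
Qed.

Lemma sumH2 : \sum_i \sum_j (Hm R s i j) ^+ 2 = (cnt s)%:R.
Proof.
rewrite -sumH; apply: eq_bigr => i _; apply: eq_bigr => j _.
by rewrite HE; case: (i + j < s)%N; rewrite ?expr1n ?expr0n.
Qed.

Lemma sumK : \sum_i \sum_j Km R s i j = 2 * (s%:R) ^+ 2 - (cnt s)%:R.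
Proof.
rewrite -sumH (eq_bigr (fun i : 'I_s => 2 * s%:R - \sum_j Hm R s i j)).
  by rewrite sumrB sumr_const card_ord -[_ *+ s]mulr_natr; ring.
move=> i _; rewrite (eq_bigr (fun j : 'I_s => 2 - Hm R s i j)); last by move=> j _; rewrite KE.
by rewrite sumrB sumr_const card_ord mulr_natr.
Qed.

Lemma sumK2 : \sum_i \sum_j (Km R s i j) ^+ 2 = 4 * (s%:R) ^+ 2 - 3 * (cnt s)%:R.
Proof.
rewrite -sumH (eq_bigr (fun i : 'I_s => 4 * s%:R - 3 * \sum_j Hm R s i j)).
  by rewrite sumrB sumr_const card_ord -[_ *+ s]mulr_natr -mulr_sumr; ring.
move=> i _; rewrite (eq_bigr (fun j : 'I_s => 4 - 3 * Hm R s i j)).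
  by rewrite sumrB sumr_const card_ord mulr_natr -mulr_sumr.
move=> j _; rewrite KE HE; case: (i + j < s)%N; rewrite /= ?mulr1n ?mulr0n; ring.
Qed.

Lemma ray_o n (M : 'M[R]_n) :
  ((const_mx 1 : 'rV[R]_n) *m M *m (const_mx 1 : 'rV[R]_n)^T) 0 0 = \sum_i \sum_j M i j.
Proof.
rewrite mxE exchange_big; apply: eq_bigr => j _.
by rewrite !mxE mulr1; apply: eq_bigr => i _; rewrite mxE mul1r.
Qed.

Lemma oo n : ((const_mx 1 : 'rV[R]_n) *m (const_mx 1 : 'rV[R]_n)^T) 0 0 = n%:R.
Proof.
rewrite mxE (eq_bigr (fun _ => 1)); first by rewrite sumr_const card_ord.
by move=> i _; rewrite !mxE mulr1.
Qed.

End Sums.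

Lemma sq_le (R : realDomainType) (l : seq R) x : x \in l -> x ^+ 2 <= \sum_(r <- l) r ^+ 2.
Proof.
move=> /perm_to_rem pe; rewrite (perm_big _ pe) big_cons lerDl.
by apply: sumr_ge0 => r _; rewrite sqr_ge0.
Qed.

Lemma sq2_le (R : realDomainType) (l : seq R) x y : x \in l -> y \in rem x l ->
  x ^+ 2 + y ^+ 2 <= \sum_(r <- l) r ^+ 2.
Proof.
move=> /perm_to_rem pe hy; rewrite (perm_big _ pe) big_cons lerD2l.
exact: sq_le.
Qed.

Lemma rem_cat_l (T : eqType) (x : T) s1 s2 : x \in s1 -> rem x (s1 ++ s2) = rem x s1 ++ s2.
Proof.
elim: s1 => [//|y s1 IH] hx /=; case: ifP => // yx; rewrite IH //.
by move: hx; rewrite inE eq_sym yx.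
Qed.

Lemma key_lemma (R : rcfType) (s : nat) (hs : (0 < s)%N) (lam ks hl : seq R)
  (szl : size lam = (s + s)%N) (so : sorted (fun x y : R => `|y| <= `|x|) lam)
  (pl : perm_eq lam (ks ++ hl))
  (rayK : forall (x : 'rV_s) (r0 : R), (forall r : R, r \in ks -> r <= r0) ->
     (x *m Km R s *m x^T) 0 0 <= r0 * (x *m x^T) 0 0)
  (rayH : forall (x : 'rV_s) (r0 : R), (forall r : R, r \in hl -> r <= r0) ->
     (x *m Hm R s *m x^T) 0 0 <= r0 * (x *m x^T) 0 0)
  (trK : \sum_(r <- ks) r ^+ 2 = \sum_i \sum_j (Km R s i j) ^+ 2)
  (trH : \sum_(r <- hl) r ^+ 2 = \sum_i \sum_j (Hm R s i j) ^+ 2)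
  (szh : size hl = s) (szk : size ks = s) :
  lam`_1 \in hl /\ forall h, h \in hl -> `|h| <= `|lam`_1|.
Proof.
have hln : hl != [::] by rewrite -size_eq0 szh -lt0n.
have ksn : ks != [::] by rewrite -size_eq0 szk -lt0n.
  set S : R := s%:R; set c : R := (cnt s)%:R.
  have tri' : 2 * c = S * (S + 1).
    by rewrite /c /S natr1 -!natrM tri.
  have S1 : 1 <= S by rewrite ler1n.
  have [k0 k0in k0max] := @exists_max R id ks ksn.
  have rk := rayK (const_mx 1) k0 k0max.
  rewrite ray_o oo sumK -/S -/c in rk.
  have [h0 h0in h0max] := @exists_max R id hl hln.
  have rh := rayH (const_mx 1) h0 h0max.
  rewrite ray_o oo sumH -/S -/c in rh.
  have [y yin ymax] := @exists_max R (fun x => `|x|) hl hln.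
  rewrite sumK2 -/S -/c in trK; rewrite sumH2 -/c in trH.
  have hy : S + 1 <= 2 * `|y|.
    have h0y : h0 <= `|y| := le_trans (ler_norm h0) (ymax h0 h0in).
    have : S * (S + 1) <= S * (2 * h0) by rewrite -tri'; lra.
    rewrite ler_pM2l; last by lra.
    lra.
  have y2 : `|y| ^+ 2 <= c by rewrite real_normK ?num_real // -trH; exact: sq_le.
  have k0b : 3 * S - 1 <= 2 * k0.
    have : S * (3 * S - 1) <= S * (2 * k0) by nra.
    by rewrite ler_pM2l; last by lra.
  have remk : forall k, k \in rem k0 ks -> `|k| < `|y|.
    move=> k kin.
    have := @sq2_le _ _ _ _ k0in kin; rewrite trK => hk.
    have ny : 0 <= `|y| := normr_ge0 y.
    have nk : 0 <= `|k| := normr_ge0 k.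
    have k2 : `|k| ^+ 2 = k ^+ 2 by rewrite real_normK ?num_real.
    nra.
  have pl' : perm_eq lam (k0 :: (rem k0 ks ++ hl)).
    apply: (perm_trans pl); rewrite -cat_cons perm_cat2r; exact: perm_to_rem.
  have restb : forall x, x \in rem k0 ks ++ hl -> `|x| <= `|y|.
    move=> x; rewrite mem_cat => /orP[/remk/ltW //|/ymax //].
  case: (ltnP 1 s) => s2.
    have S2 : 2 <= S by rewrite ler_nat.
    have yk : `|y| < `|k0|.
      have k0p : 0 <= k0 by lra.
      rewrite (ger0_norm k0p).
      have ny : 0 <= `|y| := normr_ge0 y.
      nra.
    have yr : y \in rem k0 ks ++ hl by rewrite mem_cat yin orbT.
    have [l1r l1y] := @second_elem _ _ _ _ _ so pl' yk restb (ex_intro2 _ _ y yr erefl).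
    split.
      move: l1r; rewrite mem_cat => /orP[/remk|//].
      by rewrite l1y ltxx.
    by move=> h hin; rewrite l1y ymax.
  have s1 : s = 1%N by apply/anti_leq; rewrite s2 hs.
  have S1' : S = 1 by rewrite /S s1.
  rewrite S1' in tri' rk rh trK hy k0b.
  have c1 : c = 1 by lra.
  rewrite c1 in trH trK rh rk y2.
  have h01 : h0 = 1.
    have := @sq_le _ _ _ h0in; rewrite trH => h2; nra.
  have k01 : k0 = 1.
    have := @sq_le _ _ _ k0in; rewrite trK => h2; nra.
  have one : forall (l : seq R) a b, size l = 1%N -> a \in l -> b \in l -> a = b.
    by move=> l a b; case: l => [|u [|]] //= _; rewrite !inE => /eqP -> /eqP ->.
  have alls : forall x, x \in lam -> x = 1.
    move=> x; rewrite (perm_mem pl) mem_cat => /orP[] xin.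
      by rewrite -k01; apply: (one ks); rewrite ?szk.
    by rewrite -h01; apply: (one hl); rewrite ?szh.
  have l1 : lam`_1 = 1 by apply: alls; apply: mem_nth; rewrite szl s1.
  rewrite l1 -h01; split => // h hin.
  by rewrite (alls h _) ?h01 //; rewrite (perm_mem pl) mem_cat hin orbT.
Qed.

Lemma gen (R : rcfType) (s : nat) (hs : (1 <= s)%N) n (e : n = (s + s)%N) (lam : seq R)
  (hlam : [/\ size lam = n, char_poly (Amat R s n) = \prod_(x <- lam) ('X - x%:P)
      & sorted (fun x y => `|y| <= `|x|) lam]) :
  exists gam : seq R,
    [/\ [/\ size gam = n, char_poly (const_mx 1 - Amat R s n) = \prod_(x <- gam) ('X - x%:P)
      & sorted (fun x y => `|y| <= `|x|) gam],
        `|lam`_1| = `|gam`_1|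
      & exists v : 'cV[R]_n,
          [/\ v != 0, Amat R s n *m v = lam`_1 *: v
            & (const_mx 1 - Amat R s n) *m v = gam`_1 *: v]].
Proof.
subst n; rewrite bandE; case: hlam; rewrite bandE => szl cpA so.
have Tu := Tunit R s.
have cpA' : char_poly (Km R s) * char_poly (Hm R s) = \prod_(x <- lam) ('X - x%:P).
  have D : Dm R s = invmx (Tm R s) *m Ablk R s *m Tm R s.
    by rewrite -mulmxA ATD mulmxA mulVmx // mul1mx.
  rewrite -cpA -(@char_poly_conj _ _ (Tm R s) (Ablk R s) Tu) -D /char_poly /Dm.
  by rewrite char_block_diag_mx det_ublock.
have [ks [hl [cK cH pl]]] := split_prod (char_poly_monic (Km R s)) (char_poly_monic (Hm R s)) cpA'.
have [rayK trK] := @spec_real R s (Km R s) ks (Ksym R s) cK.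
have [rayH trH] := @spec_real R s (Hm R s) hl (Hsym R s) cH.
have szh : size hl = s.
  by have := size_char_poly (Hm R s); rewrite cH size_prod_XsubC => -[].
have szk : size ks = s.
  by have := size_char_poly (Km R s); rewrite cK size_prod_XsubC => -[].
have hln : hl != [::] by rewrite -size_eq0 szh -lt0n.
have ksn : ks != [::] by rewrite -size_eq0 szk -lt0n.
have key := @key_lemma R s hs lam ks hl szl so pl rayK rayH trK trH szh szk.
case: key => l1h l1max.
set l := lam`_1.
have : eigenvalue (Hm R s) l by rewrite eigenvalue_root_char cH root_prod_XsubC.
case/eigenvalueP => u hu un0.
set x := u^T.
have Hx : Hm R s *m x = l *: x by rewrite /x -Hsym -trmx_mul hu linearZ.
set v := Tm R s *m col_mx 0 x.
have Dx : Dm R s *m col_mx 0 x = l *: col_mx 0 x.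
  by rewrite /Dm mul_block_col !mulmx0 !mul0mx ?add0r ?addr0 Hx scale_col_mx scaler0.
have D2x : Dm2 R s *m col_mx 0 x = (- l) *: col_mx 0 x.
  by rewrite /Dm2 mul_block_col !mulmx0 !mul0mx ?add0r ?addr0 mulNmx Hx scale_col_mx scaler0 scaleNr.
have vn0 : v != 0.
  apply/negP => /eqP v0.
  have : col_mx (0 : 'cV[R]_s) x = 0 by rewrite -(mulKmx Tu (col_mx 0 x)) -/v v0 mulmx0.
  move/eqP; rewrite col_mx_eq0 eqxx /= => /eqP x0.
  by move/negP: un0; apply; rewrite -(trmxK u) -/x x0 trmx0.
set L := hl ++ map -%R hl.
set rest := rem (- l) (rem l L).
set gam := l :: - l :: sort (@rabs R) rest.
have Ll : l \in L by rewrite mem_cat l1h.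
have Lnl : - l \in rem l L.
  by rewrite /L rem_cat_l // mem_cat map_f ?orbT.
have pg : perm_eq gam L.
  rewrite perm_sym (permPl (perm_to_rem Ll)) perm_cons.
  by rewrite (permPl (perm_to_rem Lnl)) perm_cons perm_sym perm_sort.
exists gam; split.
- split.
  + by rewrite (perm_size pg) size_cat size_map szh.
  + have D2 : Dm2 R s = invmx (Tm R s) *m (const_mx 1 - Ablk R s) *m Tm R s.
      by rewrite -mulmxA BTD mulmxA mulVmx // mul1mx.
    rewrite -(@char_poly_conj _ _ (Tm R s) (const_mx 1 - Ablk R s) Tu) -D2 /char_poly /Dm2.
    rewrite char_block_diag_mx det_ublock.
    have cHo := @char_poly_opp _ _ (Hm R s) hl cH.
    move: cH cHo; rewrite /char_poly => -> ->.
    by rewrite (perm_big _ pg) big_cat /= big_map.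
  + have tot : total (@rabs R) by move=> a b; rewrite /rabs le_total.
    change (is_true (sorted (@rabs R) gam)).
    rewrite /gam /= {1}/rabs normrN lexx /=.
    rewrite (path_sortedE (@rabs_trans R)) sort_sorted // andbT.
    apply/allP => z; rewrite mem_sort => /mem_rem /mem_rem.
    rewrite /rabs normrN mem_cat => /orP[/l1max //|/mapP [h hin ->]].
    by rewrite normrN l1max.
- by rewrite /gam /= normrN.
- exists v; split => //.
  + by rewrite /v mulmxA ATD -mulmxA Dx -scalemxAr.
  + by rewrite /v mulmxA BTD -mulmxA D2x -scalemxAr.
Qed.

(* lam`_1 is lambda_2(A), gam`_1 is gamma_2 (0-based sequence indexing). *)
Theorem theorem9 (R : rcfType) (s : nat) (hs : (1 <= s)%N)
    (lam : seq R) (hlam : abs_ordered_eigenvalues (bandA R s) lam) :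
  exists gam : seq R,
    [/\ abs_ordered_eigenvalues (bandB R s) gam,
        `|lam`_1| = `|gam`_1|
      & exists v : 'cV[R]_(s.*2),
          [/\ v != 0, bandA R s *m v = lam`_1 *: v
            & bandB R s *m v = gam`_1 *: v]].
Proof.
exact: (@gen R s hs s.*2 (esym (addnn s)) lam hlam).
Qed.
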